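(* Let $n\ge3$ and $\tau\in\mathbb{C}^\times$. With $\Delta$ as in the context, $$\prod_{\mu=2}^{n-2}(x_\mu-z_1\tau)\,\Delta(z_1\tau^{-1},x_2,\dots,x_{n-2}\,|\,z_1\tau^{-n},z_2,\dots,z_n)=\prod_{\mu=2}^{n-2}(x_\mu-z_1\tau^{-1})\,\Delta(z_1\tau,x_2,\dots,x_{n-2}\,|\,z_1\tau^{n},z_2,\dots,z_n).$$
   Context: For $\lambda\ge1$, $A_\lambda(x|z_1,\dots,z_n)=\sum_{\kappa=0}^{\lambda}(-1)^\kappa x^{\lambda-\kappa}\big(\tau^{n(\lambda-\kappa)+\kappa}-\tau^{-n(\lambda-\kappa)-\kappa}\big)\sigma_\kappa(z_1,\dots,z_n)$, where $\sigma_\kappa$ is the $\kappa$-th elementary symmetric polynomial ($\sigma_\kappa=0$ for $\kappa>n$), and $\Delta(x_1,\dots,x_{n-2}|z_1,\dots,z_n)=\det\big(A_\lambda(x_\mu|z_1,\dots,z_n)\big)_{1\le\lambda,\mu\le n-2}$. *)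

(* Defs.v *)
From HB Require Import structures.
From mathcomp Require Import all_boot all_order all_algebra.
From mathcomp Require Import reals Rstruct.
From mathcomp Require Import complex.
Set Implicit Arguments. Unset Strict Implicit. Unset Printing Implicit Defensive.
Import Order.TTheory GRing.Theory Num.Theory.
Local Open Scope ring_scope.

Definition Cplx := (Rdefinitions.R)[i].

(* elementary symmetric polynomial sigma_k evaluated at z_1..z_n
   (indices shifted: z_j is z (j-1)); equals 0 when k > n *)
Definition esym (n k : nat) (z : 'I_n -> Cplx) : Cplx :=
  \sum_(S : {set 'I_n} | #|S| == k) \prod_(i in S) z i.

Definition Apoly (n lam : nat) (x : Cplx) (z : 'I_n -> Cplx) (tau : Cplx) : Cplx :=
  \sum_(k < lam.+1)
     (-1) ^+ k * x ^+ (lam - k)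
     * (tau ^+ (n * (lam - k) + k) - (tau ^+ (n * (lam - k) + k))^-1)
     * esym k z.

(* Delta(x_1..x_{n-2} | z_1..z_n) = det (A_lambda(x_mu|z))_{1<=lambda,mu<=n-2};
   row index i : 'I_(n-2) stands for lambda = i+1, column j for mu = j+1. *)
Definition Delta (n : nat) (x : 'I_(n - 2) -> Cplx) (z : 'I_n -> Cplx) (tau : Cplx) : Cplx :=
  \det (\matrix_(i < n - 2, j < n - 2) Apoly i.+1 (x j) z tau).

(* Main.v *)
Require Import Defs.
From HB Require Import structures.
From mathcomp Require Import all_boot all_order all_algebra.
From mathcomp Require Import reals Rstruct complex.
From mathcomp Require Import ring zify.
Import Order.TTheory GRing.Theory Num.Theory.
Local Open Scope ring_scope.



Section Gen.
Variable R : comRingType.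

Lemma det_rowop N (b : R) (F : nat -> 'I_N -> R) :
  (forall j, F 0%N j = 0) ->
  \det (\matrix_(i < N, j < N) (F i.+1 j - b * F i j)) =
  \det (\matrix_(i < N, j < N) F i.+1 j).
Proof.
move=> F0.
pose B := \matrix_(i < N, k < N) ((i == k)%:R - b * (val i == k.+1)%:R : R).
have -> : \matrix_(i < N, j < N) (F i.+1 j - b * F i j) =
   B *m \matrix_(i < N, j < N) F i.+1 j.
  apply/matrixP=> i j; rewrite !mxE.
  under eq_bigr => k _ do rewrite !mxE mulrBl.
  rewrite sumrB (bigD1 i) //= eqxx mul1r big1 ?addr0; last first.
    by move=> k /negPf; rewrite eq_sym => ->; rewrite mul0r.
  congr (_ - _).
  case: i => [[|i'] hi] /=.
    by rewrite F0 mulr0 big1 // => k _; rewrite mul0r.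
  have hi' : (i' < N)%N by apply: ltn_trans hi.
  rewrite (bigD1 (Ordinal hi')) //= eqxx mulr1 big1 ?addr0 // => k hk.
  case: eqP => [[e]|_]; last by rewrite mulr0 mul0r.
  by case/eqP: hk; apply/val_inj; rewrite /= e.
rewrite det_mulmx (det_trig (A := B)) ?mul1r.
  rewrite big1 ?mul1r // => i _; rewrite mxE eqxx.
  by rewrite eqn_leq ltnn andbF mulr0 subr0.
apply/is_trig_mxP=> i j hij; rewrite mxE.
rewrite -val_eqE /= (ltn_eqF hij).
have -> : (val i == j.+1) = false by apply/negbTE; rewrite neq_ltn (ltn_trans hij).
by rewrite mulr0 subr0.
Qed.

Lemma det_colscale N (M : 'M[R]_N) (d : 'I_N -> R) :
  \det (\matrix_(i < N, j < N) (M i j * d j)) = \det M * \prod_j d j.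
Proof.
have -> : \matrix_(i < N, j < N) (M i j * d j) = M *m diag_mx (\row_j d j).
  by rewrite mul_mx_diag; apply/matrixP=> i j; rewrite !mxE.
by rewrite det_mulmx det_diag; under eq_bigr do rewrite mxE.
Qed.

Lemma det_coladd N (M : 'M[R]_N) (j0 : 'I_N) (k : R) :
  val j0 = 0%N ->
  \det (\matrix_(i < N, j < N) (M i j + (if j == j0 then 0 else k * M i j0))) = \det M.
Proof.
move=> hj0.
pose U := \matrix_(l < N, j < N) ((l == j)%:R + (l == j0)%:R * (if j == j0 then 0 else k) : R).
have -> : \matrix_(i < N, j < N) (M i j + (if j == j0 then 0 else k * M i j0)) = M *m U.
  apply/matrixP=> i j; rewrite !mxE.
  under eq_bigr => l _ do rewrite !mxE mulrDr.
  rewrite big_split /= (bigD1 j) //= eqxx mulr1 big1 ?addr0; last first.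
    by move=> l /negPf ->; rewrite mulr0.
  rewrite (bigD1 j0) //= eqxx mul1r big1 ?addr0; last first.
    by move=> l /negPf ->; rewrite mul0r mulr0.
  by case: (j == j0); rewrite ?mulr0 // mulrC.
rewrite det_mulmx -[\det U]det_tr (det_trig (A := U^T)) ?mulr1.
  rewrite big1 ?mulr1 // => i _; rewrite !mxE eqxx.
  by case: (i == j0); rewrite ?mulr0 ?mul0r ?addr0.
apply/is_trig_mxP=> i j hij; rewrite !mxE.
have -> : (j == i) = false by apply/negbTE; rewrite neq_ltn hij orbT.
have -> : (j == j0) = false.
  by apply/negbTE/eqP => e; move: hij; rewrite e hj0.
by rewrite mul0r addr0.
Qed.

End Gen.



Definition H (e : nat -> Cplx) (y : Cplx) (l : nat) : Cplx :=
  \sum_(k < l.+1) (-1) ^+ k * y ^+ (l - k) * e k.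
Definition prevf (f : nat -> Cplx) (l : nat) : Cplx :=
  if l is l'.+1 then f l' else 0.

Lemma H_rec e y l : H e y l = y * prevf (H e y) l + (-1) ^+ l * e l.
Proof.
case: l => [|l].
  by rewrite /H big_ord1 subnn expr0 mulr0 add0r mulr1.
rewrite /H big_ord_recr subnn expr0 mulr1 /=; congr (_ + _).
rewrite mulr_sumr; apply: eq_bigr => k _.
rewrite subSn; last by rewrite -ltnS.
rewrite exprS; ring.
Qed.

Lemma H_lin (e1 e2 : nat -> Cplx) (w y : Cplx) l :
  H (fun k => e1 k + w * e2 k) y l = H e1 y l + w * H e2 y l.
Proof.
rewrite /H mulr_sumr -big_split /=; apply: eq_bigr => k _.
ring.
Qed.

Lemma H_prev e y l : H (prevf e) y l = - prevf (H e y) l.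
Proof.
case: l => [|l]; first by rewrite /H big_ord1 mulr0 oppr0.
rewrite /H big_ord_recl mulr0 add0r -sumrN; apply: eq_bigr => k _.
rewrite lift0 subSS exprS /=. ring.
Qed.



Lemma Apoly_H n lam (x : Cplx) (z : 'I_n -> Cplx) (tau : Cplx) : (0 < n)%N -> tau != 0 ->
  Apoly lam x z tau = tau ^+ lam * H (fun k => Defs.esym k z) (x * tau ^+ n.-1) lam
     - (tau ^+ lam)^-1 * H (fun k => Defs.esym k z) (x / tau ^+ n.-1) lam.
Proof.
move=> hn ht; rewrite /Apoly /H !mulr_sumr -sumrB; apply: eq_bigr => [[k hk]] _.
rewrite [nat_of_ord _]/=.
have -> : (n * (lam - k) + k = lam + n.-1 * (lam - k))%N.
  move: hn hk; clear; case: n => [|n] // _ hk; rewrite /= mulSn; lia.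
rewrite exprD exprM invfM !exprMn exprVn. 
ring.
Qed.



Definition epsz n (i0 : 'I_n) (z : 'I_n -> Cplx) (k : nat) : Cplx :=
  \sum_(S : {set 'I_n} | (#|S| == k) && (i0 \notin S)) \prod_(i in S) z i.

Arguments epsz {n}.

Lemma esym_split n (i0 : 'I_n) (z : 'I_n -> Cplx) (w : Cplx) k : val i0 = 0%N ->
  Defs.esym k (fun i : 'I_n => if val i == 0%N then w else z i)
  = epsz i0 z k + w * prevf (epsz i0 z) k.
Proof.
move=> hi0.
have E i : (val i == 0%N) = (i == i0) by rewrite -val_eqE /= hi0.
have E' (i : 'I_n) : (nat_of_ord i == 0%N) = (i == i0) by rewrite -val_eqE /= hi0.
rewrite /Defs.esym (bigID (fun S : {set 'I_n} => i0 \notin S)).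
congr (_ + _).
  apply: eq_bigr => S /andP[_ hS]; apply: eq_bigr => i hi; rewrite E.
  case: eqP => [e|_]; last reflexivity.
  by move: hS; rewrite -e hi.
transitivity (w * \sum_(S : {set 'I_n} | (#|S| == k) && (i0 \in S))
                     \prod_(i in S :\ i0) z i).
  rewrite mulr_sumr; apply: eq_big => [S|S /andP[_ /negPn hS]]; first by rewrite negbK.
  rewrite (bigD1 i0) /=; last exact: hS.
  rewrite E eqxx; congr (_ * _); apply: eq_big => [i|i].
    by rewrite !inE andbC.
  by rewrite E' => /andP[_ /negPf ->].
f_equal; case: k => [|k].
  rewrite big_pred0; first reflexivity.
  move=> S; apply/negbTE; apply/andP=> [[/eqP/cards0_eq -> ]].
  by rewrite inE.
rewrite (reindex_onto (fun S => i0 |: S) (fun S => S :\ i0)); last first.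
  by move=> S /andP[_ hS]; rewrite setD1K.
apply: eq_big => [S|S /andP[_ /eqP ->]]; last reflexivity.
rewrite setU11 andbT.
case hS: (i0 \in S).
  rewrite andbF; apply/negbTE/negP => /eqP e.
  move/eqP/andP: e => [_ /eqP e]; move: hS; rewrite -e !inE eqxx.
  by [].
have e1 : (i0 |: S) :\ i0 = S by apply: setU1K; rewrite hS.
have e2 : #|i0 |: S| = #|S|.+1 by rewrite cardsU1 hS.
rewrite e1 e2 eqxx andbT; by [].
Qed.



Definition Fhi (t T q X w g1 g2 s0 s1 : Cplx) :=
  t*T * ((X*q*g1 + s0)*(X*q) + s1 - w*(X*q*g1+s0))
  - (t*T)^-1 * ((X/q*g2+s0)*(X/q) + s1 - w*(X/q*g2 + s0)).
Definition Flo (T q X w g1 g2 s0 : Cplx) :=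
  T*((X*q*g1+s0) - w*g1) - T^-1*((X/q*g2+s0) - w*g2).

Lemma H_ext (e e' : nat -> Cplx) y l : (forall k, e k = e' k) -> H e y l = H e' y l.
Proof. by move=> h; apply: eq_bigr => k _; rewrite h. Qed.

Lemma Apoly_pair n (i0 : 'I_n) (z : 'I_n -> Cplx) (tau w X : Cplx) l :
  (0 < n)%N -> tau != 0 -> val i0 = 0%N ->
  let zw := fun i : 'I_n => if val i == 0%N then w else z i in
  let q := tau ^+ n.-1 in let ep := epsz i0 z in
  let g1 := prevf (H ep (X * q)) l in let g2 := prevf (H ep (X / q)) l in
  let s0 := (-1) ^+ l * ep l in let s1 := (-1) ^+ l.+1 * ep l.+1 in
  Apoly l.+1 X zw tau = Fhi tau (tau ^+ l) q X w g1 g2 s0 s1 /\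
  Apoly l X zw tau = Flo (tau ^+ l) q X w g1 g2 s0.
Proof.
move=> hn ht hi0 zw q ep g1 g2 s0 s1.
have HE Y m : H (fun k => Defs.esym k zw) Y m = H ep Y m - w * prevf (H ep Y) m.
  rewrite (H_ext _ (fun k => ep k + w * prevf ep k)); last first.
    by move=> k; rewrite /zw (@esym_split _ i0 z w k hi0).
  by rewrite H_lin H_prev mulrN.
have R1 Y : H ep Y l = Y * prevf (H ep Y) l + (-1) ^+ l * ep l by apply: H_rec.
have R2 Y : H ep Y l.+1 = Y * H ep Y l + (-1) ^+ l.+1 * ep l.+1.
  by rewrite (H_rec _ _ l.+1).
split.
  rewrite Apoly_H // !HE !R2 [prevf _ l.+1]/= [prevf _ l.+1]/= !R1 /Fhi exprS.
  rewrite -/q -/g1 -/g2 -/s0 -/s1.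
  ring.
rewrite Apoly_H // !HE !R1 /Flo -/q -/g1 -/g2 -/s0.
ring.
Qed.



Lemma key1 (t T q a s0 s1 gL1 gL2 gR1 gR2 : Cplx) : t != 0 -> T != 0 -> q != 0 ->
  Fhi t T q (a/t) (a/(t*q)) gL1 gL2 s0 s1 - a*q * Flo T q (a/t) (a/(t*q)) gL1 gL2 s0
  = Fhi t T q (a*t) (a*(t*q)) gR1 gR2 s0 s1 - a/q * Flo T q (a*t) (a*(t*q)) gR1 gR2 s0.
Proof. move=> ht hT hq; rewrite /Fhi /Flo; field; by rewrite hq hT ht. Qed.

Lemma key2 (t T q a X s0 s1 g1 g2 gR1 gR2 : Cplx) : t != 0 -> T != 0 -> q != 0 ->
  (X - a*t) * (Fhi t T q X (a/(t*q)) g1 g2 s0 s1 - a*q * Flo T q X (a/(t*q)) g1 g2 s0)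
  = (X - a/t) * (Fhi t T q X (a*(t*q)) g1 g2 s0 s1 - a/q * Flo T q X (a*(t*q)) g1 g2 s0)
   + a*(t^-1 - t) * (Fhi t T q (a*t) (a*(t*q)) gR1 gR2 s0 s1 - a/q * Flo T q (a*t) (a*(t*q)) gR1 gR2 s0).
Proof. move=> ht hT hq; rewrite /Fhi /Flo; field; by rewrite hq hT ht. Qed.

Lemma key2' (t T q a X s0 s1 g1 g2 gR1 gR2 : Cplx) : t != 0 -> T != 0 -> q != 0 ->
  Fhi t T q X (a/(t*q)) g1 g2 s0 s1 * (X - a*t) - a*q * (Flo T q X (a/(t*q)) g1 g2 s0 * (X - a*t))
  = (Fhi t T q X (a*(t*q)) g1 g2 s0 s1 * (X - a/t) + a*(t^-1 - t) * Fhi t T q (a*t) (a*(t*q)) gR1 gR2 s0 s1)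
   - a/q * (Flo T q X (a*(t*q)) g1 g2 s0 * (X - a/t) + a*(t^-1 - t) * Flo T q (a*t) (a*(t*q)) gR1 gR2 s0).
Proof. move=> ht hT hq; rewrite /Fhi /Flo; field; by rewrite hq hT ht. Qed.

Lemma Apoly0 n (x : Cplx) (z : 'I_n -> Cplx) tau : Apoly 0 x z tau = 0.
Proof. by rewrite /Apoly big_ord1 /= muln0 expr0 invr1 subrr mulr0 mul0r. Qed.

Theorem lemma4p2 (n : nat) (hn : (3 <= n)%N) (tau : Cplx) (htau : tau != 0)
  (x : 'I_(n - 2) -> Cplx) (z : 'I_n -> Cplx) (z1 : Cplx)
  (hz1 : forall i : 'I_n, val i = 0%N -> z i = z1) :
  (\prod_(j < n - 2 | val j != 0%N) (x j - z1 * tau))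
    * Delta (fun j : 'I_(n - 2) => if val j == 0%N then z1 * tau^-1 else x j)
            (fun i : 'I_n => if val i == 0%N then z1 * (tau ^+ n)^-1 else z i) tau
  = (\prod_(j < n - 2 | val j != 0%N) (x j - z1 * tau^-1))
    * Delta (fun j : 'I_(n - 2) => if val j == 0%N then z1 * tau else x j)
            (fun i : 'I_n => if val i == 0%N then z1 * tau ^+ n else z i) tau.
Proof.
have hn0 : (0 < n)%N by apply: leq_trans hn.
have hN : (0 < n - 2)%N by rewrite subn_gt0.
pose i0 : 'I_n := Ordinal hn0.
pose j0 : 'I_(n - 2) := Ordinal hN.
have hi0 : val i0 = 0%N by [].
have hj0 : val j0 = 0%N by [].
pose q := tau ^+ n.-1.
have hq : tau ^+ n = tau * q by rewrite /q -exprS prednK.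
have hq0 : q != 0 by rewrite expf_neq0.
set xL := fun j : 'I_(n - 2) => if val j == 0%N then z1 * tau^-1 else x j.
set zL := fun i : 'I_n => if val i == 0%N then z1 * (tau ^+ n)^-1 else z i.
set xR := fun j : 'I_(n - 2) => if val j == 0%N then z1 * tau else x j.
set zR := fun i : 'I_n => if val i == 0%N then z1 * tau ^+ n else z i.
pose dL j : Cplx := if val j == 0%N then 1 else x j - z1 * tau.
pose dR j : Cplx := if val j == 0%N then 1 else x j - z1 * tau^-1.
pose FL l j := Apoly l (xL j) zL tau * dL j.
pose kk := z1 * (tau^-1 - tau).
pose GR l j := Apoly l (xR j) zR tau * dR j
   + (if j == j0 then 0 else kk * (Apoly l (xR j0) zR tau * dR j0)).
have PL : \prod_(j < n - 2 | val j != 0%N) (x j - z1 * tau) = \prod_j dL j.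
  rewrite big_mkcond; apply: eq_bigr => j _; rewrite /dL.
  by case: (val j == 0%N).
have PR : \prod_(j < n - 2 | val j != 0%N) (x j - z1 * tau^-1) = \prod_j dR j.
  rewrite big_mkcond; apply: eq_bigr => j _; rewrite /dR.
  by case: (val j == 0%N).
have EL : \prod_(j < n - 2 | val j != 0%N) (x j - z1 * tau) * Delta xL zL tau
    = \det (\matrix_(i < n - 2, j < n - 2) (FL i.+1 j - (z1 * q) * FL i j)).
  rewrite det_rowop; last by move=> j; rewrite /FL Apoly0 mul0r.
  rewrite PL mulrC /Delta -det_colscale; congr (\det _).
  by apply/matrixP => i j; rewrite !mxE.
have ER : \prod_(j < n - 2 | val j != 0%N) (x j - z1 * tau^-1) * Delta xR zR tau
    = \det (\matrix_(i < n - 2, j < n - 2) (GR i.+1 j - (z1 / q) * GR i j)).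
  rewrite det_rowop; last first.
    by move=> j; rewrite /GR !Apoly0 !mul0r mulr0 add0r; case: (j == j0).
  rewrite PR mulrC /Delta -det_colscale.
  rewrite -(@det_coladd _ _ _ j0 kk hj0); congr (\det _).
  by apply/matrixP => i j; rewrite !mxE.
rewrite EL ER; congr (\det _); apply/matrixP => i j; rewrite !mxE.
have hT : tau ^+ i != 0 by rewrite expf_neq0.
rewrite /FL /GR /xL /xR /zL /zR /dL /dR.
case: (eqVneq j j0) => [->|hj].
  rewrite hj0 eqxx /=.
  rewrite (proj1 (@Apoly_pair n i0 z tau (z1 * (tau ^+ n)^-1) (z1 * tau^-1) i hn0 htau hi0)).
  rewrite (proj2 (@Apoly_pair n i0 z tau (z1 * (tau ^+ n)^-1) (z1 * tau^-1) i hn0 htau hi0)).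
  rewrite (proj1 (@Apoly_pair n i0 z tau (z1 * (tau ^+ n)) (z1 * tau) i hn0 htau hi0)).
  rewrite (proj2 (@Apoly_pair n i0 z tau (z1 * (tau ^+ n)) (z1 * tau) i hn0 htau hi0)).
  rewrite hq !mulr1 !addr0.
  exact: key1.
have hjv : (val j == 0%N) = false.
  by apply/negbTE; apply: contra hj => /eqP e; apply/eqP/val_inj; rewrite e hj0.
rewrite hjv hj0 eqxx.
rewrite (proj1 (@Apoly_pair n i0 z tau (z1 * (tau ^+ n)^-1) (x j) i hn0 htau hi0)).
rewrite (proj2 (@Apoly_pair n i0 z tau (z1 * (tau ^+ n)^-1) (x j) i hn0 htau hi0)).
rewrite (proj1 (@Apoly_pair n i0 z tau (z1 * (tau ^+ n)) (x j) i hn0 htau hi0)).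
rewrite (proj2 (@Apoly_pair n i0 z tau (z1 * (tau ^+ n)) (x j) i hn0 htau hi0)).
rewrite (proj1 (@Apoly_pair n i0 z tau (z1 * (tau ^+ n)) (z1 * tau) i hn0 htau hi0)).
rewrite (proj2 (@Apoly_pair n i0 z tau (z1 * (tau ^+ n)) (z1 * tau) i hn0 htau hi0)).
rewrite hq !mulr1 /kk.
exact: key2'.
Qed.
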